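(* Let $K$ be a CMI on $X_1,\dots,X_n$ in pure form. Then $K\sim\mathrm{can}(K)$.
   Context: Setting: $X_1,\dots,X_n$ jointly distributed discrete random variables with $H(X_i)<\infty$; distribution unspecified. $X_\alpha=(X_i,i\in\alpha)$, $X_\emptyset$ constant. A CMI is $K=(C,\langle Q_1,\dots,Q_k\rangle)$, $k\ge0$, $C\subseteq\{1,\dots,n\}$, $\langle\cdot\rangle$ an unordered multiset of subsets; it is valid (for a given distribution) if $\sum_{i=1}^kH(X_{Q_i}|X_C)-H(X_{Q_1},\dots,X_{Q_k}|X_C)=0$. Empty members may be deleted. $K\sim K'$: for every joint distribution both valid or both invalid. Degenerate CMIs (always valid) are written $(\cdot,\langle\ \rangle)$. $K$ is in pure form if all $Q_i\ne\emptyset$ and $Q_i\cap C=\emptyset$. Canonical form of pure $K$: $\mathbb I_K$ = set of indices lying in at least two members (distinct positions) of the collection if $k\ge2$, $\emptyset$ otherwise; $P_1,\dots,P_t$ the nonempty sets among $Q_i\setminus\mathbb I_K$ (with multiplicity); $\mathrm{can}(K)=(\cdot,\langle\ \rangle)$ if $k\le1$; $(C,\langle\mathbb I_K,\mathbb I_K\rangle)$ if $k\ge2,\mathbb I_K\ne\emptyset,t\le1$; $(C,\langle P_1,\dots,P_t\rangle)$ if $k\ge2,\mathbb I_K=\emptyset$; $(C,\langle\mathbb I_K,\mathbb I_K,P_1,\dots,P_t\rangle)$ if $k\ge2,\mathbb I_K\ne\emptyset,t\ge2$. *)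

(* Defs.v *)
From HB Require Import structures.
From mathcomp Require Import all_boot all_order all_algebra.
From mathcomp Require Import all_classical all_reals.
From mathcomp Require Import ereal esum exp.
Set Implicit Arguments. Unset Strict Implicit. Unset Printing Implicit Defensive.
Import Order.TTheory GRing.Theory Num.Theory.
Local Open Scope classical_set_scope.
Local Open Scope ring_scope.

(* Variables X_1..X_n are indexed by 'I_n.  Every discrete random variable
   takes countably many values, so w.l.o.g. values are in nat; a joint
   distribution is a probability mass function on nat^n. *)
Definition outcome (n : nat) := {ffun 'I_n -> nat}.

Section Entropy.
Variable (R : realType) (n : nat).

Definition is_pmf (p : outcome n -> R) : Prop :=
  (forall x, 0 <= p x) /\ (\esum_(x in [set: outcome n]) (p x)%:E = 1%E).

Definition marg (p : outcome n -> R) (alpha : {set 'I_n}) (y : outcome n) : R :=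
  fine (\esum_(x in [set x : outcome n | forall i, i \in alpha -> x i = y i])
          (p x)%:E).

(* H(X_alpha), as an extended real; values y of X_alpha are encoded as
   outcomes vanishing outside alpha *)
Definition entropy (p : outcome n -> R) (alpha : {set 'I_n}) : \bar R :=
  \esum_(y in [set y : outcome n | forall i, i \notin alpha -> y i = 0%N])
     (- (marg p alpha y * ln (marg p alpha y)))%:E.

Definition joint_dist (p : outcome n -> R) : Prop :=
  is_pmf p /\ forall i : 'I_n, (entropy p [set i] < +oo)%E.

Definition cond_entropy (p : outcome n -> R) (A C : {set 'I_n}) : \bar R :=
  (entropy p (A :|: C) - entropy p C)%E.

(* A CMI (C, <Q_1,...,Q_k>); the multiset is represented by a list *)
Definition CMI := ({set 'I_n} * seq {set 'I_n})%type.

(* sum_i H(X_{Q_i}|X_C) - H(X_{Q_1},...,X_{Q_k}|X_C) = 0 ;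
   the joint variable (X_{Q_1},...,X_{Q_k}) carries the same information
   as X_{Q_1 u ... u Q_k} *)
Definition valid (p : outcome n -> R) (K : CMI) : Prop :=
  ((\sum_(Q <- K.2) cond_entropy p Q K.1)
     - cond_entropy p (\bigcup_(Q <- K.2) Q) K.1)%E = 0%E.

Definition cmi_equiv (K K' : CMI) : Prop :=
  forall p, joint_dist p -> (valid p K <-> valid p K').

End Entropy.

Local Close Scope classical_set_scope.
Local Open Scope set_scope.

Section Canonical.
Variable n : nat.

Definition pure_form (K : CMI n) : Prop :=
  forall Q, Q \in K.2 -> Q != finset.set0 /\ Q :&: K.1 = finset.set0.

Definition intersect_set (K : CMI n) : {set 'I_n} :=
  if (2 <= size K.2)%N then
    [set i | (2 <= count (fun Q : {set 'I_n} => i \in Q) K.2)%N]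
  else finset.set0.

Definition residues (K : CMI n) : seq {set 'I_n} :=
  seq.filter (fun P => P != finset.set0) (map (fun Q => Q :\: intersect_set K) K.2).

Definition degenerate_cmi : CMI n := (finset.set0, [::]).

Definition can (K : CMI n) : CMI n :=
  let I := intersect_set K in
  let Ps := residues K in
  if (size K.2 <= 1)%N then degenerate_cmi
  else if I == finset.set0 then (K.1, Ps)
  else if (size Ps <= 1)%N then (K.1, [:: I; I])
  else (K.1, I :: I :: Ps).

End Canonical.

(* Main.v *)
Require Import Defs.
From HB Require Import structures.
From mathcomp Require Import all_boot all_order all_algebra.
From mathcomp Require Import all_classical all_reals.
From mathcomp Require Import ereal esum exp.
From mathcomp Require Import lra.
Set Implicit Arguments. Unset Strict Implicit. Unset Printing Implicit Defensive.
Import Order.TTheory GRing.Theory Num.Theory.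

Section Comb.
Local Open Scope ring_scope.
Local Open Scope set_scope.
Variables (R : realType) (n : nat) (f : {set 'I_n} -> R).
Hypothesis f0 : f finset.set0 = 0.
Hypothesis fmono : forall A B : {set 'I_n}, A \subset B -> f A <= f B.
Hypothesis fsub : forall A B : {set 'I_n}, f (A :|: B) + f (A :&: B) <= f A + f B.

Lemma fge0 A : 0 <= f A.
Proof. by rewrite -f0; apply: fmono; exact: finset.sub0set. Qed.

Lemma fsubadd A B : f (A :|: B) <= f A + f B.
Proof. have := fsub A B; have := fge0 (A :&: B); lra. Qed.

Definition cup (s : seq {set 'I_n}) := \bigcup_(Q <- s) Q.
Definition defi (s : seq {set 'I_n}) := \sum_(Q <- s) f Q - f (cup s).

Lemma cup_cons Q s : cup (Q :: s) = Q :|: cup s.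
Proof. by rewrite /cup big_cons. Qed.

Lemma defi_cons Q s : defi s + f (Q :&: cup s) <= defi (Q :: s).
Proof.
rewrite /defi big_cons cup_cons; have := fsub Q (cup s); lra.
Qed.

Lemma defi_ge0 s : 0 <= defi s.
Proof.
elim: s => [|Q s IH]; first by rewrite /defi /cup !big_nil f0 subr0.
have := defi_cons Q s; have := fge0 (Q :&: cup s); lra.
Qed.

Definition Idef (s : seq {set 'I_n}) : {set 'I_n} :=
  [set i | (2 <= count (fun Q : {set 'I_n} => i \in Q) s)%N].

Lemma mem_cup i s : (i \in cup s) = (0 < count (fun Q : {set 'I_n} => i \in Q) s)%N.
Proof.
elim: s => [|Q s IH]; first by rewrite /cup big_nil finset.in_set0.
rewrite cup_cons finset.in_setU IH /=; case: (i \in Q) => //.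
Qed.

Lemma key s : defi s = 0 -> f (Idef s) = 0.
Proof.
elim: s => [|Q s IH] H.
  rewrite (_ : Idef [::] = finset.set0) //; apply/finset.setP => i; by rewrite !inE.
have h1 := defi_cons Q s; have h2 := fge0 (Q :&: cup s); have h3 := defi_ge0 s.
have ds : defi s = 0 by lra.
have fq : f (Q :&: cup s) = 0 by lra.
apply/eqP; rewrite eq_le fge0 andbT.
apply: (le_trans (fmono (_ : Idef (Q :: s) \subset (Q :&: cup s) :|: Idef s))).
  apply/fintype.subsetP => i; rewrite !inE /= mem_cup.
  case: (i \in Q); case: (count _ s) => [|[|k]] //=.
have := fsubadd (Q :&: cup s) (Idef s); rewrite fq (IH ds); lra.
Qed.

Lemma fI0U I X : f I = 0 -> f (I :|: X) = f X.
Proof.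
move=> fI; apply/eqP; rewrite eq_le; have := fsubadd I X; rewrite fI add0r => ->.
by rewrite fmono // finset.subsetUr.
Qed.

Lemma fI0D I X : f I = 0 -> f X = f (X :\: I).
Proof.
move=> fI; apply/eqP; rewrite eq_le; apply/andP; split.
  rewrite -(fI0U (X :\: I) fI); apply: fmono; apply/fintype.subsetP => i.
  by rewrite !inE; case: (i \in I); case: (i \in X).
apply: fmono; exact: finset.subsetDl.
Qed.

Definition res (I : {set 'I_n}) s :=
  seq.filter (fun P => P != finset.set0) (map (fun Q => Q :\: I) s).

Lemma sum_res I s : f I = 0 -> \sum_(Q <- s) f Q = \sum_(P <- res I s) f P.
Proof.
move=> fI; elim: s => [|Q s IH]; first by rewrite /res !big_nil.
rewrite /res /= big_cons -/(res I s) (fI0D Q fI).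
case: eqP => [->|_]; first by rewrite f0 add0r.
by rewrite big_cons IH.
Qed.

Lemma cup_res I s : cup (res I s) = cup s :\: I.
Proof.
elim: s => [|Q s IH]; first by rewrite /res /cup !big_nil finset.set0D.
rewrite /res /= -/(res I s) cup_cons finset.setDUl -IH.
case: eqP => [->|_]; first by rewrite finset.set0U.
by rewrite cup_cons.
Qed.

Lemma defi_res I s : f I = 0 -> defi s = defi (res I s).
Proof.
move=> fI; rewrite /defi (sum_res s fI) cup_res -(fI0D _ fI) //.
Qed.

Lemma defi_small s : (size s <= 1)%N -> defi s = 0.
Proof.
case: s => [|Q [|//]] _; rewrite /defi /cup ?big_nil ?big_cons ?big_nil ?f0 ?subrr //.
by rewrite finset.setU0 addr0 subrr.
Qed.

Lemma main_comb s : defi s = 0 <-> f (Idef s) = 0 /\ defi (res (Idef s) s) = 0.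
Proof.
split => [H|[fI H]]; last by rewrite (defi_res s fI).
have fI := key H; split => //; by rewrite -(defi_res s fI).
Qed.

Lemma defi_II I s : defi (I :: I :: s) = 0 <-> f I = 0 /\ defi s = 0.
Proof.
split => [H|[fI H]].
  have h1 := defi_cons I (I :: s); have h2 := defi_cons I s.
  have h3 := defi_ge0 s; have h4 := fge0 (I :&: cup s).
  rewrite cup_cons finset.setIUr finset.setIid in h1.
  have h5 := fmono (finset.subsetUl I (I :&: cup s)).
  have h6 := fge0 I.
  have fI : f I = 0 by lra.
  split => //; lra.
rewrite /defi !big_cons !cup_cons !(fI0U _ fI) fI !add0r; exact: H.
Qed.

End Comb.

Section Info.
Local Open Scope ring_scope.
Local Open Scope set_scope.
Local Open Scope classical_set_scope.
Variables (R : realType) (n : nat) (p : outcome n -> R).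
Hypothesis p0 : forall x, 0 <= p x.
Hypothesis p1 : (\esum_(x in [set: outcome n]) (p x)%:E = 1)%E.

Definition agree (a : {set 'I_n}) (y : outcome n) : set (outcome n) :=
  [set x | forall i, i \in a -> x i = y i].
Definition Yset (a : {set 'I_n}) : set (outcome n) :=
  [set y | forall i, i \notin a -> y i = 0%N].
Definition proj (a : {set 'I_n}) (x : outcome n) : outcome n :=
  [ffun i => if i \in a then x i else 0%N].

Lemma proj_Y a x : Yset a (proj a x).
Proof. by move=> i /negPf ia; rewrite ffunE ia. Qed.

Lemma agree_proj a x : agree a (proj a x) x.
Proof. by move=> i ia; rewrite ffunE ia. Qed.

Lemma Y_agree_eq a y y' x : Yset a y -> Yset a y' -> agree a y x -> agree a y' x -> y = y'.
Proof.
move=> Yy Yy' ay ay'; apply/ffunP => i; case: (boolP (i \in a)) => ia.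
  by rewrite -ay // ay'.
by rewrite Yy // Yy'.
Qed.

Lemma esum_bigcupJ (J : choiceType) (D : set J) (F : J -> set (outcome n))
    (g : outcome n -> \bar R) :
  (forall j k x, D j -> D k -> F j x -> F k x -> j = k) -> (forall x, (0 <= g x)%E) ->
  (\esum_(x in \bigcup_(j in D) F j) g x = \esum_(j in D) \esum_(x in F j) g x)%E.
Proof.
move=> tJ a0; rewrite esum_esum//; apply: reindex_esum => //; split.
- by move=> [/= i j] [Ki Jij]; exists i.
- move=> [/= i1 j1] [/= i2 j2]; rewrite ?inE/=.
  move=> [K1 J1] [K2 J2] j12; subst j2; congr (_, _) => //.
  exact: (tJ i1 i2 j1).
- by move=> j [i Ki Jij]/=; exists (i, j).
Qed.

Lemma esum_part (S : set (outcome n)) a (g : outcome n -> \bar R) :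
  (forall x, (0 <= g x)%E) ->
  (\esum_(x in S) g x = \esum_(y in Yset a) \esum_(x in S `&` agree a y) g x)%E.
Proof.
move=> g0; rewrite -esum_bigcupJ //; last first.
  by move=> j k x Dj Dk [_ ajx] [_ akx]; exact: (Y_agree_eq Dj Dk ajx akx).
congr esum; apply/seteqP; split => x.
  by move=> Sx; exists (proj a x); [exact: proj_Y|split => //; exact: agree_proj].
by move=> [y _ []].
Qed.

Lemma esum_sub (A B : set (outcome n)) (g : outcome n -> \bar R) :
  A `<=` B -> (forall x, (0 <= g x)%E) ->
  (\esum_(x in A) g x <= \esum_(x in B) g x)%E.
Proof.
move=> AB g0; rewrite esum_mkcond [X in (_ <= X)%E]esum_mkcond.
apply: le_esum => x _; case: ifPn => xA; last by case: ifPn.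
by rewrite ifT // inE; apply: AB; move: xA; rewrite inE.
Qed.

Lemma esumZ (S : set (outcome n)) (c : R) (g : outcome n -> \bar R) :
  0 <= c -> (forall x, (0 <= g x)%E) ->
  (\esum_(x in S) (c%:E * g x) = c%:E * \esum_(x in S) g x)%E.
Proof.
move=> c0 g0; have [->|cpos] := eqVneq c 0.
  by rewrite mul0e esum1 // => x _; rewrite mul0e.
have cgt : 0 < c by rewrite lt0r cpos.
rewrite /esum -ereal_sup_pZl //; congr ereal_sup; apply/seteqP; split.
  move=> _ [A HA <-]; exists (\sum_(x \in A) g x)%E; first by exists A.
  by rewrite ge0_mule_fsumr.
by move=> _ [_ [A HA <-] <-]; exists A => //; rewrite ge0_mule_fsumr.
Qed.

Lemma psum_le1 S : (\esum_(x in S) (p x)%:E <= 1)%E.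
Proof. rewrite -p1; apply: esum_sub => // x; exact: p0. Qed.

Lemma psum_ge0 S : (0 <= \esum_(x in S) (p x)%:E)%E.
Proof. by apply: esum_ge0 => x _; rewrite lee_fin. Qed.

Lemma psum_fin S : \esum_(x in S) (p x)%:E \is a fin_num.
Proof. by rewrite ge0_fin_numE ?psum_ge0 // (le_lt_trans (psum_le1 S)) // ltry. Qed.

Lemma margE a y : (marg p a y)%:E = (\esum_(x in agree a y) (p x)%:E)%E.
Proof. by rewrite /marg fineK // psum_fin. Qed.

Lemma marg_ge0 a y : 0 <= marg p a y.
Proof. by rewrite -lee_fin margE psum_ge0. Qed.

Lemma marg_le1 a y : marg p a y <= 1.
Proof. by rewrite -lee_fin margE psum_le1. Qed.

Lemma marg_agree_sub (a b : {set 'I_n}) x z : a \subset b -> agree b z x -> marg p a x = marg p a z.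
Proof.
move=> ab axz; apply: EFin_inj; rewrite !margE; congr esum.
apply/seteqP; split => w /= H i ia.
  by rewrite H // axz // (fintype.subsetP ab).
by rewrite H // axz // (fintype.subsetP ab).
Qed.

Lemma marg_mono (a b : {set 'I_n}) x : a \subset b -> marg p b x <= marg p a x.
Proof.
move=> ab; rewrite -lee_fin !margE; apply: esum_sub => [w H i ia|w].
  by apply: H; rewrite (fintype.subsetP ab).
by rewrite lee_fin.
Qed.

Lemma marg_gep a x : p x <= marg p a x.
Proof.
rewrite -lee_fin margE.
have -> : (p x)%:E = (\esum_(w in [set x]) (p w)%:E)%E by rewrite esum_set1 // lee_fin.
by apply: esum_sub => [w -> //|w]; rewrite lee_fin.
Qed.

Definition L a x := - ln (marg p a x).

Lemma L_ge0 a x : 0 <= L a x.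
Proof. by rewrite /L oppr_ge0 ln_le0 // marg_le1. Qed.

Lemma pL_ge0 a x : (0 <= (p x * L a x)%:E)%E.
Proof. by rewrite lee_fin mulr_ge0 // L_ge0. Qed.

Lemma entropyE a : entropy p a = (\esum_(x in [set: outcome n]) (p x * L a x)%:E)%E.
Proof.
rewrite (esum_part [set: outcome n] a); last by move=> x; apply: pL_ge0.
rewrite /entropy; apply: eq_esum => y Yy; rewrite setTI.
rewrite (eq_esum (b := fun x => ((L a y)%:E * (p x)%:E)%E)); last first.
  move=> x axy; rewrite -EFinM mulrC /L.
  by rewrite (marg_agree_sub (fintype.subxx a) axy).
rewrite esumZ ?L_ge0 // ?lee_fin //=.
by rewrite -margE -EFinM /L mulNr mulrC.
Qed.

Lemma H_ge0 a : (0 <= entropy p a)%E.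
Proof. by rewrite entropyE; apply: esum_ge0 => x _; apply: pL_ge0. Qed.

Lemma H_mono (a b : {set 'I_n}) : a \subset b -> (entropy p a <= entropy p b)%E.
Proof.
move=> ab; rewrite !entropyE; apply: le_esum => x _; rewrite lee_fin.
have [->|px] := eqVneq (p x) 0; first by rewrite !mul0r.
have pgt : 0 < p x by rewrite lt0r px p0.
apply: ler_wpM2l => //; rewrite /L lerN2 ler_ln ?posrE ?marg_mono //.
  exact: (lt_le_trans pgt (marg_gep _ _)).
exact: (lt_le_trans pgt (marg_gep _ _)).
Qed.


Definition tt (A B : {set 'I_n}) x :=
  marg p A x * marg p B x / (marg p (A :&: B) x * marg p (A :|: B) x).

Lemma t_ge0 A B x : 0 <= tt A B x.
Proof. by rewrite /tt divr_ge0 ?mulr_ge0 ?marg_ge0. Qed.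

Lemma term_ineq (A B : {set 'I_n}) x :
  p x * L (A :|: B) x + p x * L (A :&: B) x + p x <=
  p x * L A x + p x * L B x + p x * tt A B x.
Proof.
have [->|px] := eqVneq (p x) 0; first by rewrite !mul0r !addr0.
have pgt : 0 < p x by rewrite lt0r px p0.
have ha : 0 < marg p A x := lt_le_trans pgt (marg_gep _ _).
have hb : 0 < marg p B x := lt_le_trans pgt (marg_gep _ _).
have hc : 0 < marg p (A :&: B) x := lt_le_trans pgt (marg_gep _ _).
have hd : 0 < marg p (A :|: B) x := lt_le_trans pgt (marg_gep _ _).
have tpos : 0 < tt A B x by rewrite /tt divr_gt0 ?mulr_gt0.
have lnt : ln (tt A B x) = ln (marg p A x) + ln (marg p B x)
    - ln (marg p (A :&: B) x) - ln (marg p (A :|: B) x).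
  rewrite /tt ln_div ?posrE ?mulr_gt0 // !lnM ?posrE //.
  by rewrite opprD addrA.
have le1 : ln (tt A B x) <= tt A B x - 1.
  have e : 1 + (tt A B x - 1) = tt A B x by lra.
  have := @le_ln1Dx R (tt A B x - 1); rewrite e; apply; lra.
have inner : L (A :|: B) x + L (A :&: B) x + 1 <= L A x + L B x + tt A B x.
  rewrite /L; lra.
have := ler_wpM2l (ltW pgt) inner; rewrite !mulrDr mulr1 => H; lra.
Qed.

Lemma Et_le1 (A B : {set 'I_n}) :
  (\esum_(x in [set: outcome n]) (p x * tt A B x)%:E <= 1)%E.
Proof.
rewrite (esum_part [set: outcome n] (A :|: B)); last first.
  by move=> x; rewrite lee_fin mulr_ge0 // t_ge0.
pose s z := marg p A z * marg p B z / marg p (A :&: B) z.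
have s_ge0 z : 0 <= s z by rewrite /s divr_ge0 ?mulr_ge0 ?marg_ge0.
apply: (@le_trans _ _ (\esum_(z in Yset (A :|: B)) (s z)%:E)%E).
  apply: le_esum => z Yz; rewrite setTI.
  rewrite (eq_esum (b := fun x => ((tt A B z)%:E * (p x)%:E)%E)); last first.
    move=> x axz; rewrite -EFinM mulrC /tt.
    rewrite (marg_agree_sub (finset.subsetUl A B) axz).
    rewrite (marg_agree_sub (finset.subsetUr A B) axz).
    rewrite (marg_agree_sub (fintype.subxx (A :|: B)) axz).
    rewrite (marg_agree_sub (_ : A :&: B \subset A :|: B) axz) //.
    exact: (fintype.subset_trans (finset.subsetIl A B) (finset.subsetUl A B)).
  rewrite esumZ ?t_ge0 //; try by move=> x; rewrite lee_fin.
  rewrite -margE -EFinM lee_fin.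
  have [d0|dn0] := eqVneq (marg p (A :|: B) z) 0; first by rewrite d0 mulr0.
  by rewrite /tt /s invfM mulrA divfK.
rewrite (esum_part (Yset (A :|: B)) A); last by move=> z; rewrite lee_fin s_ge0.
apply: (@le_trans _ _ (\esum_(u in Yset A) (marg p A u)%:E)%E); last first.
  rewrite -p1 (esum_part [set: outcome n] A); last by move=> x; rewrite lee_fin.
  by apply: le_esum => u _; rewrite setTI -margE.
apply: le_esum => u Yu.
rewrite (eq_esum (b := fun z => ((marg p A u / marg p (A :&: B) u)%:E * (marg p B z)%:E)%E)); last first.
  move=> z [Yz azu]; rewrite -EFinM /s.
  rewrite (marg_agree_sub (fintype.subxx A) azu) (marg_agree_sub (finset.subsetIl A B) azu).
  by rewrite mulrAC.
rewrite esumZ ?divr_ge0 ?marg_ge0 //; last by move=> z; rewrite lee_fin marg_ge0.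
apply: (@le_trans _ _ ((marg p A u / marg p (A :&: B) u)%:E * (marg p (A :&: B) u)%:E)%E).
  apply: lee_wpmul2l; first by rewrite lee_fin divr_ge0 ?marg_ge0.
  rewrite (eq_esum (b := fun z => \esum_(x in agree B z) (p x)%:E)%E); last first.
    by move=> z _; rewrite margE.
  rewrite -esum_bigcupJ; last by move=> x; rewrite lee_fin.
    rewrite margE; apply: esum_sub; last by move=> x; rewrite lee_fin.
    move=> x [z [Yz azu] axz] i; rewrite finset.in_setI => /andP[iA iB].
    by rewrite axz // azu.
  move=> j k x [Yj aju] [Yk aku] ajx akx; apply/ffunP => i.
  case: (boolP (i \in B)) => iB; first by rewrite -ajx // akx.
  case: (boolP (i \in A)) => iA; first by rewrite aju // aku.
  by rewrite Yj ?Yk // finset.in_setU negb_or iA iB.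
rewrite -EFinM lee_fin.
have [c0|cn0] := eqVneq (marg p (A :&: B) u) 0; first by rewrite c0 mulr0 marg_ge0.
by rewrite divfK.
Qed.

Lemma esumD3 (S : set (outcome n)) (u v w : outcome n -> \bar R) :
  (forall x, (0 <= u x)%E) -> (forall x, (0 <= v x)%E) -> (forall x, (0 <= w x)%E) ->
  (\esum_(x in S) (u x + v x + w x) =
   \esum_(x in S) u x + \esum_(x in S) v x + \esum_(x in S) w x)%E.
Proof.
move=> u0 v0 w0; rewrite esumD; first rewrite esumD //.
all: by move=> x _; rewrite ?adde_ge0.
Qed.

Lemma H_submod (A B : {set 'I_n}) :
  (entropy p (A :|: B) + entropy p (A :&: B) <= entropy p A + entropy p B)%E.
Proof.
have E1 : (\esum_(x in [set: outcome n]) ((p x * L (A :|: B) x)%:E +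
   (p x * L (A :&: B) x)%:E + (p x)%:E) <=
  \esum_(x in [set: outcome n]) ((p x * L A x)%:E + (p x * L B x)%:E +
   (p x * tt A B x)%:E))%E.
  by apply: le_esum => x _; rewrite -!EFinD lee_fin; exact: term_ineq.
rewrite !esumD3 in E1.
rewrite -!entropyE p1 in E1.
rewrite -(@leeD2rE _ 1) //; apply: (le_trans E1); apply: leeD2l; exact: Et_le1.
all: move=> x. all: rewrite lee_fin. all: try apply: mulr_ge0. all: try apply: t_ge0. all: try apply: L_ge0. all: try apply: p0.
Qed.

Lemma H_set0 : entropy p finset.set0 = 0%E.
Proof.
rewrite entropyE esum1 // => x _; rewrite /L.
have -> : marg p finset.set0 x = 1.
  apply: EFin_inj; rewrite margE -p1; congr esum; apply/seteqP; split => w // _ i.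
  by rewrite finset.in_set0.
by rewrite ln1 oppr0 mulr0.
Qed.

Lemma H_subadd A B : (entropy p (A :|: B) <= entropy p A + entropy p B)%E.
Proof. exact: le_trans (leeDl _ (H_ge0 (A :&: B))) (H_submod A B). Qed.

Hypothesis hfin : forall i : 'I_n, (entropy p [set i] < +oo)%E.

Lemma H_fin a : (entropy p a < +oo)%E.
Proof.
move: {2}#|a| (erefl #|a|) => k; elim: k a => [|k IH] a ca.
  by rewrite (cards0_eq ca) H_set0 ltry.
have : a != finset.set0 by rewrite -card_gt0 ca.
case/set0Pn => i ia; rewrite -(finset.setD1K ia).
apply: le_lt_trans (H_subadd _ _) _; apply: lte_add_pinfty; first exact: hfin.
by apply: IH; move: ca; rewrite (cardsD1 i a) ia add1n => -[].
Qed.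

Definition hr a := fine (entropy p a).

Lemma hE a : entropy p a = (hr a)%:E.
Proof. by rewrite /hr fineK // ge0_fin_numE ?H_ge0 ?H_fin. Qed.

Lemma hr_mono (A B : {set 'I_n}) : A \subset B -> hr A <= hr B.
Proof. by move=> AB; rewrite -lee_fin -!hE H_mono. Qed.

Lemma hr_submod (A B : {set 'I_n}) : hr (A :|: B) + hr (A :&: B) <= hr A + hr B.
Proof. by rewrite -lee_fin !EFinD -!hE H_submod. Qed.

End Info.

Local Open Scope ring_scope.
Local Open Scope set_scope.

Lemma validE (R : realType) n (p : outcome n -> R)
  (hE : forall a, entropy p a = (hr p a)%:E) C s :
  valid p (C, s) <-> defi (fun A => hr p (A :|: C) - hr p C) s = 0.
Proof.
rewrite /valid /cond_entropy /=.
rewrite (eq_bigr (fun Q => (hr p (Q :|: C) - hr p C)%:E)); last by move=> Q _; rewrite !hE.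
rewrite sumEFin !hE -!EFinB /defi /cup.
by split => [[]|->].
Qed.

Theorem mainTheorem4 (R : realType) (n : nat) (K : CMI n) :
  pure_form K -> cmi_equiv R K (can K).
Proof.
move=> _ p [[p0 p1] hfin].
have hE := hE p0 p1 hfin.
have vE := validE hE.
pose f C A := hr p (A :|: C) - hr p C.
have f0 C : f C finset.set0 = 0 by rewrite /f finset.set0U subrr.
have fmono C : forall A B : {set 'I_n}, A \subset B -> f C A <= f C B.
  move=> A B AB; rewrite /f lerD2r; apply: hr_mono => //.
  by apply: finset.setSU.
have fsub C : forall A B : {set 'I_n}, f C (A :|: B) + f C (A :&: B) <= f C A + f C B.
  move=> A B; rewrite /f.
  have := hr_submod p0 p1 hfin (A :|: C) (B :|: C).
  have -> : (A :|: C) :|: (B :|: C) = (A :|: B) :|: C.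
    by apply/finset.setP => i; rewrite !finset.in_setU; case: (i \in A); case: (i \in B); case: (i \in C).
  have -> : (A :|: C) :&: (B :|: C) = (A :&: B) :|: C.
    by apply/finset.setP => i; rewrite !(finset.in_setU, finset.in_setI); case: (i \in A); case: (i \in B); case: (i \in C).
  lra.
case: K => C s; rewrite /can /=.
case: leqP => hs.
  rewrite /degenerate_cmi !vE.
  by rewrite !(defi_small (f0 _)).
have IE : intersect_set (C, s) = Idef s by rewrite /intersect_set /= hs.
have RE : residues (C, s) = res (Idef s) s by rewrite /residues IE.
rewrite IE RE; case: eqP => [I0|In0].
  rewrite !vE (main_comb (f0 C) (fmono C) (fsub C)) I0 f0.
  by split => [[]|H].
case: leqP => hr1; rewrite !vE (main_comb (f0 C) (fmono C) (fsub C)) (defi_II (f0 C) (fmono C) (fsub C)) //.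
by rewrite (defi_small (f0 C) hr1) (defi_small (f0 C) (s := [::])).
Qed.
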